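(* For every group $G$ and every ring $k$, the set $D^1(k[G])$ with its addition and multiplication is a ring with unit $(1_G,0)$ and zero element $(0,0)$.
   Context: For a ring $k$ and group $G$, $k[G]$ is the group ring, and $(k[G])[G]$ is the set of finitely supported maps $\beta\colon G\to k[G]$, $g\mapsto\beta(g)$, with $\beta(g)(h)\in k$. $D^1(k[G])=k[G]\times(k[G])[G]$ with componentwise addition and multiplication $(\alpha_1,\beta_1)*(\alpha_2,\beta_2)=(\alpha_1\alpha_2,\ \alpha_1\beta_2+\beta_1\alpha_2+\beta_1\beta_2)$, where $\alpha_1\alpha_2$ is the group ring product and, for $\alpha\in k[G]$, $\beta,\gamma\in(k[G])[G]$, $g,h\in G$: $(\alpha\beta)(g)(h)=\sum_{t\in G}\alpha(t)\beta(gt)(t^{-1}h)$, $(\beta\alpha)(g)(h)=\sum_{t\in G}\beta(g)(t)\alpha(t^{-1}h)$, $(\beta\gamma)(g)(h)=\sum_{t\in G}\beta(g)(t)\gamma(gt)(t^{-1}h)$. *)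

(* Defs.v *)
From HB Require Import structures.
From mathcomp Require Import all_boot all_order all_algebra.
From mathcomp Require Import boolp classical_sets cardinality fsbigop.
Set Implicit Arguments. Unset Strict Implicit. Unset Printing Implicit Defensive.
Import Order.TTheory GRing.Theory Num.Theory.
Local Open Scope classical_set_scope.
Local Open Scope ring_scope.

(* G : groupType (monoid.v) is an arbitrary, possibly infinite, group;
   its operations are written with the group_scope notations (%g). *)

Section D1.
Variables (k : pzRingType) (G : groupType).

(* Elements of k[G] are represented by maps G -> k; an element of (k[G])[G]
   by a map G -> (G -> k), beta g h = beta(g)(h). *)

Definition fsupp (a : G -> k) : Prop := finite_set [set g | a g != 0].
Definition fsupp2 (b : G -> G -> k) : Prop :=
  finite_set [set g | exists h, b g h != 0] /\ forall g, fsupp (b g).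

Definition gr_zero : G -> k := fun _ => 0.
Definition gr_one : G -> k := fun g => if (g == 1%g) then 1 else 0.
Definition gr_add (a b : G -> k) : G -> k := fun g => a g + b g.
Definition gr_opp (a : G -> k) : G -> k := fun g => - a g.
Definition gr_mul (a b : G -> k) : G -> k :=
  fun h => \sum_(t \in [set: G]) (a t * b (t^-1 * h)%g).

Definition gr2_zero : G -> G -> k := fun _ _ => 0.
Definition gr2_add (b c : G -> G -> k) : G -> G -> k := fun g h => b g h + c g h.
Definition gr2_opp (b : G -> G -> k) : G -> G -> k := fun g h => - b g h.
Definition lact (a : G -> k) (b : G -> G -> k) : G -> G -> k :=
  fun g h => \sum_(t \in [set: G]) (a t * b (g * t)%g (t^-1 * h)%g).
Definition ract (b : G -> G -> k) (a : G -> k) : G -> G -> k :=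
  fun g h => \sum_(t \in [set: G]) (b g t * a (t^-1 * h)%g).
Definition mul2 (b c : G -> G -> k) : G -> G -> k :=
  fun g h => \sum_(t \in [set: G]) (b g t * c (g * t)%g (t^-1 * h)%g).

Definition D1 := ((G -> k) * (G -> G -> k))%type.
Definition inD1 (x : D1) : Prop := fsupp x.1 /\ fsupp2 x.2.

Definition D1_zero : D1 := (gr_zero, gr2_zero).
Definition D1_one : D1 := (gr_one, gr2_zero).
Definition D1_add (x y : D1) : D1 := (gr_add x.1 y.1, gr2_add x.2 y.2).
Definition D1_opp (x : D1) : D1 := (gr_opp x.1, gr2_opp x.2).
Definition D1_mul (x y : D1) : D1 :=
  (gr_mul x.1 y.1,
   gr2_add (gr2_add (lact x.1 y.2) (ract x.2 y.1)) (mul2 x.2 y.2)).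

Definition D1_is_ring : Prop :=
  inD1 D1_zero /\ inD1 D1_one /\
  (forall x y, inD1 x -> inD1 y -> inD1 (D1_add x y)) /\
  (forall x, inD1 x -> inD1 (D1_opp x)) /\
  (forall x y, inD1 x -> inD1 y -> inD1 (D1_mul x y)) /\
  (forall x y z, inD1 x -> inD1 y -> inD1 z ->
     D1_add x (D1_add y z) = D1_add (D1_add x y) z) /\
  (forall x y, inD1 x -> inD1 y -> D1_add x y = D1_add y x) /\
  (forall x, inD1 x -> D1_add D1_zero x = x) /\
  (forall x, inD1 x -> D1_add (D1_opp x) x = D1_zero) /\
  (forall x y z, inD1 x -> inD1 y -> inD1 z ->
     D1_mul x (D1_mul y z) = D1_mul (D1_mul x y) z) /\
  (forall x, inD1 x -> D1_mul D1_one x = x) /\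
  (forall x, inD1 x -> D1_mul x D1_one = x) /\
  (forall x y z, inD1 x -> inD1 y -> inD1 z ->
     D1_mul (D1_add x y) z = D1_add (D1_mul x z) (D1_mul y z)) /\
  (forall x y z, inD1 x -> inD1 y -> inD1 z ->
     D1_mul x (D1_add y z) = D1_add (D1_mul x y) (D1_mul x z)).
End D1.

(* Main.v *)
From HB Require Import structures.
From mathcomp Require Import all_boot all_order all_algebra.
From mathcomp Require Import finmap boolp classical_sets cardinality fsbigop.
Require Import Defs.
Set Implicit Arguments. Unset Strict Implicit. Unset Printing Implicit Defensive.
Import Order.TTheory GRing.Theory Num.Theory.
Local Open Scope classical_set_scope.
Local Open Scope ring_scope.

Section Tools.
Variables (k : pzRingType) (G : groupType).

Notation supp f := [set g : G | f g != (0 : k)].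

Lemma nsupp (f : G -> k) t : ~ supp f t -> f t = 0.
Proof. by move=> H; apply/eqP; apply/negPn/negP. Qed.

Lemma mul_nz (x y : k) : x * y != 0 -> x != 0 /\ y != 0.
Proof. by move=> H; split; apply: contraNneq H => ->; rewrite ?mul0r ?mulr0. Qed.

Lemma fsumS (S : set G) (f : G -> k) : finite_set S -> (forall t, f t != 0 -> S t) ->
  \sum_(t \in [set: G]) f t = \sum_(t <- fset_set S) f t.
Proof.
move=> Sfin fS; apply: fsbigTE => i; rewrite in_fset_set // notin_setE => nS.
by apply: nsupp => /fS.
Qed.

Lemma fsum_nz (f : G -> k) : \sum_(t \in [set: G]) f t != 0 -> exists t, f t != 0.
Proof.
move=> H; apply: contrapT => nE; move/eqP: H; apply; apply: fsbig1 => t _.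
by apply: nsupp => ft; apply: nE; exists t.
Qed.

Lemma fsum0 (f : G -> k) : (forall t, f t = 0) -> \sum_(t \in [set: G]) f t = 0.
Proof. by move=> H; apply: fsbig1 => t _. Qed.

Lemma fsumD (f g : G -> k) : fsupp f -> fsupp g ->
  \sum_(t \in [set: G]) (f t + g t) = \sum_(t \in [set: G]) f t + \sum_(t \in [set: G]) g t.
Proof.
move=> ff fg; have fU : finite_set (supp f `|` supp g) by rewrite finite_setU.
rewrite !(fsumS fU) ?big_split // => t H; [right|left|] => //.
by apply: contraPP H => /not_orP[/nsupp -> /nsupp ->]; rewrite addr0 eqxx.
Qed.

Lemma fsumMl (c : k) (f : G -> k) : fsupp f ->
  \sum_(t \in [set: G]) (c * f t) = c * \sum_(t \in [set: G]) f t.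
Proof.
move=> ff; rewrite !(fsumS ff) ?big_distrr // => t /mul_nz[]//.
Qed.

Lemma fsumMr (c : k) (f : G -> k) : fsupp f ->
  \sum_(t \in [set: G]) (f t * c) = (\sum_(t \in [set: G]) f t) * c.
Proof.
move=> ff; rewrite !(fsumS ff) ?big_distrl // => t /mul_nz[]//.
Qed.

Lemma fsum_delta (f : G -> k) s : (forall t, t != s -> f t = 0) ->
  \sum_(t \in [set: G]) f t = f s.
Proof.
move=> H; rewrite (fsbigTE [fset s]%fset) ?finmap.big_seq_fset1 // => i.
by rewrite finmap.in_fset1 => /H.
Qed.

Lemma fsum_exchange (F : G -> G -> k) (P : set G) : finite_set P ->
  (forall t u, F t u != 0 -> P t) -> (forall t, fsupp (F t)) ->
  \sum_(t \in [set: G]) \sum_(u \in [set: G]) F t u =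
  \sum_(u \in [set: G]) \sum_(t \in [set: G]) F t u.
Proof.
move=> Pfin FP Ff.
pose Q := \bigcup_(t in P) supp (F t).
have Qfin : finite_set Q by apply: bigcup_finite => // t _; apply: Ff.
have FQ t u : F t u != 0 -> Q u by move=> H; exists t => //; apply: (FP t u).
rewrite (fsumS Pfin); last first.
  by move=> t /fsum_nz[u /FP].
rewrite [RHS](fsumS Qfin); last first.
  by move=> u /fsum_nz[t /FQ].
rewrite (eq_bigr (fun t => \sum_(u <- fset_set Q) F t u)); last first.
  by move=> t _; apply: fsumS => // u /FQ.
rewrite exchange_big; apply: eq_bigr => u _.
by rewrite (fsumS Pfin) // => t /FP.
Qed.

Lemma fsum_reindex (f : G -> k) (s : G) :
  \sum_(u \in [set: G]) f u = \sum_(t \in [set: G]) f (s * t)%g.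
Proof.
apply: (reindex_fsbigT (fun t => s * t)%g).
by exists (fun t => s^-1 * t)%g => t; rewrite ?mulKg ?mulVKg.
Qed.

End Tools.

Section Conv.
Variables (k : pzRingType) (G : groupType).
Notation supp f := [set g : G | f g != (0 : k)].
Notation "\SUM_ t F" := (\sum_(t \in [set: G]) F) (at level 41, t binder, F at level 41).

Lemma fsupp_sub (f g : G -> k) : fsupp f -> (forall t, g t != 0 -> f t != 0) -> fsupp g.
Proof. by move=> ff H; apply: sub_finite_set ff => t /H. Qed.

Lemma fsupp_shift (f : G -> k) s : fsupp f -> fsupp (fun t => f (s^-1 * t)%g).
Proof.
move=> ff; apply: (@sub_finite_set _ _ [set (s * x)%g | x in supp f]).
  by move=> t /= H; exists (s^-1 * t)%g => //; rewrite mulVKg.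
exact: finite_image.
Qed.

Lemma fin_conv (a : G -> k) (c : G -> G -> k) : fsupp a -> (forall t, fsupp (c t)) ->
  fsupp (fun h => \SUM_t (a t * c t (t^-1 * h)%g)).
Proof.
move=> fa fc.
apply: (@sub_finite_set _ _ (\bigcup_(t in supp a) [set (t * x)%g | x in supp (c t)])).
  move=> h /= /fsum_nz[t /mul_nz[a0 c0]]; exists t => //.
  by exists (t^-1 * h)%g => //; rewrite mulVKg.
apply: bigcup_finite; first exact: fa.
move=> t _; apply: (finite_image (fun x => (t * x)%g) (fc t)).
Qed.

Lemma conv_assoc (a : G -> k) (b c : G -> G -> k) h : fsupp a -> (forall s, fsupp (b s)) ->
  \SUM_t ((\SUM_s (a s * b s (s^-1 * t)%g)) * c t (t^-1 * h)%g) =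
  \SUM_s (a s * \SUM_u (b s u * c (s * u)%g (u^-1 * (s^-1 * h))%g)).
Proof.
move=> fa fb.
have row_t t : fsupp (fun s => a s * b s (s^-1 * t)%g).
  by apply: (@fsupp_sub a _ fa) => s /mul_nz[].
transitivity (\SUM_t \SUM_s ((a s * b s (s^-1 * t)%g) * c t (t^-1 * h)%g)).
  by apply: eq_fsbigr => t _; rewrite (fsumMr _ (row_t t)).
transitivity (\SUM_s \SUM_t (a s * (b s (s^-1 * t)%g * c (s * (s^-1 * t))%g ((s^-1 * t)^-1 * (s^-1 * h))%g))); last first.
  apply: eq_fsbigr => s _; rewrite -fsumMl; last first.
    by apply: (@fsupp_sub (b s) _ (fb s)) => u /mul_nz[].
  by rewrite (fsum_reindex (fun u => a s * (b s u * c (s * u)%g (u^-1 * (s^-1 * h))%g)) s^-1).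
rewrite [RHS](@fsum_exchange _ _ _ (supp a)) //.
- apply: eq_fsbigr => t _; apply: eq_fsbigr => s _.
  by rewrite mulVKg invgM invgK -mulgA mulVKg mulrA.
- by move=> s t /mul_nz[].
- move=> s; apply: (@fsupp_sub _ _ (fsupp_shift s (fb s))) => t /mul_nz[_ /mul_nz[]].
  done.
Qed.

End Conv.

Section D1Lemmas.
Variables (k : pzRingType) (G : groupType).
Notation supp f := [set g : G | f g != (0 : k)].
Notation "\SUM_ t F" := (\sum_(t \in [set: G]) F) (at level 41, t binder, F at level 41).
Implicit Types (a : G -> k) (b : G -> G -> k).

Lemma conv_Dl a a' (phi : G -> k) : fsupp a -> fsupp a' ->
  \SUM_t ((a t + a' t) * phi t) = \SUM_t (a t * phi t) + \SUM_t (a' t * phi t).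
Proof.
move=> fa fa'; rewrite -fsumD.
- by apply: eq_fsbigr => t _; rewrite mulrDl.
- by apply: (@fsupp_sub _ _ a _ fa) => t /mul_nz[].
- by apply: (@fsupp_sub _ _ a' _ fa') => t /mul_nz[].
Qed.

Lemma conv_Dr a (phi psi : G -> k) : fsupp a ->
  \SUM_t (a t * (phi t + psi t)) = \SUM_t (a t * phi t) + \SUM_t (a t * psi t).
Proof.
move=> fa; rewrite -fsumD.
- by apply: eq_fsbigr => t _; rewrite mulrDr.
- by apply: (@fsupp_sub _ _ a _ fa) => t /mul_nz[].
- by apply: (@fsupp_sub _ _ a _ fa) => t /mul_nz[].
Qed.

Lemma gr_mulDl a a' c : fsupp a -> fsupp a' ->
  gr_mul (gr_add a a') c = gr_add (gr_mul a c) (gr_mul a' c).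
Proof. by move=> fa fa'; apply/funext => h; apply: conv_Dl. Qed.

Lemma gr_mulDr a c c' : fsupp a ->
  gr_mul a (gr_add c c') = gr_add (gr_mul a c) (gr_mul a c').
Proof. by move=> fa; apply/funext => h; apply: conv_Dr. Qed.

Lemma lactDl a a' b : fsupp a -> fsupp a' ->
  lact (gr_add a a') b = gr2_add (lact a b) (lact a' b).
Proof. by move=> fa fa'; apply/funext => g; apply/funext => h; apply: conv_Dl. Qed.

Lemma lactDr a b b' : fsupp a ->
  lact a (gr2_add b b') = gr2_add (lact a b) (lact a b').
Proof. by move=> fa; apply/funext => g; apply/funext => h; apply: conv_Dr. Qed.

Lemma ractDl b b' c : (forall g, fsupp (b g)) -> (forall g, fsupp (b' g)) ->
  ract (gr2_add b b') c = gr2_add (ract b c) (ract b' c).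
Proof. by move=> fb fb'; apply/funext => g; apply/funext => h; apply: conv_Dl. Qed.

Lemma ractDr b c c' : (forall g, fsupp (b g)) ->
  ract b (gr_add c c') = gr2_add (ract b c) (ract b c').
Proof. by move=> fb; apply/funext => g; apply/funext => h; apply: conv_Dr. Qed.

Lemma mul2Dl b b' c : (forall g, fsupp (b g)) -> (forall g, fsupp (b' g)) ->
  mul2 (gr2_add b b') c = gr2_add (mul2 b c) (mul2 b' c).
Proof. by move=> fb fb'; apply/funext => g; apply/funext => h; apply: conv_Dl. Qed.

Lemma mul2Dr b c c' : (forall g, fsupp (b g)) ->
  mul2 b (gr2_add c c') = gr2_add (mul2 b c) (mul2 b c').
Proof. by move=> fb; apply/funext => g; apply/funext => h; apply: conv_Dr. Qed.

End D1Lemmas.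

Section D1Assoc.
Variables (k : pzRingType) (G : groupType).
Notation "\SUM_ t F" := (\sum_(t \in [set: G]) F) (at level 41, t binder, F at level 41).
Implicit Types (a : G -> k) (b : G -> G -> k).

Lemma gr_mulA a1 a2 a3 : fsupp a1 -> fsupp a2 ->
  gr_mul (gr_mul a1 a2) a3 = gr_mul a1 (gr_mul a2 a3).
Proof.
move=> f1 f2; apply/funext => h; rewrite /gr_mul.
exact: (@conv_assoc _ _ a1 (fun=> a2) (fun=> a3) h f1 (fun=> f2)).
Qed.

Lemma lact_mul a1 a2 b : fsupp a1 -> fsupp a2 ->
  lact (gr_mul a1 a2) b = lact a1 (lact a2 b).
Proof.
move=> f1 f2; apply/funext => g; apply/funext => h; rewrite /lact /gr_mul.
etransitivity; first exact: (@conv_assoc _ _ a1 (fun=> a2) (fun t => b (g * t)%g) h f1 (fun=> f2)).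
apply: eq_fsbigr => s _; congr (_ * _); apply: eq_fsbigr => u _; by rewrite mulgA.
Qed.

Lemma ract_lact a1 b2 a3 : fsupp a1 -> (forall g, fsupp (b2 g)) ->
  ract (lact a1 b2) a3 = lact a1 (ract b2 a3).
Proof.
move=> f1 f2; apply/funext => g; apply/funext => h; rewrite /lact /ract.
exact: (@conv_assoc _ _ a1 (fun s => b2 (g * s)%g) (fun=> a3) h f1 (fun s => f2 (g * s)%g)).
Qed.

Lemma mul2_lact a1 b2 b3 : fsupp a1 -> (forall g, fsupp (b2 g)) ->
  mul2 (lact a1 b2) b3 = lact a1 (mul2 b2 b3).
Proof.
move=> f1 f2; apply/funext => g; apply/funext => h; rewrite /lact /mul2.
etransitivity; first exact: (@conv_assoc _ _ a1 (fun s => b2 (g * s)%g) (fun t => b3 (g * t)%g) h f1 (fun s => f2 (g * s)%g)).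
apply: eq_fsbigr => s _; congr (_ * _); apply: eq_fsbigr => u _; by rewrite mulgA.
Qed.

Lemma ract_ract b1 a2 a3 : (forall g, fsupp (b1 g)) -> fsupp a2 ->
  ract (ract b1 a2) a3 = ract b1 (gr_mul a2 a3).
Proof.
move=> f1 f2; apply/funext => g; apply/funext => h; rewrite /ract /gr_mul.
exact: (@conv_assoc _ _ (b1 g) (fun=> a2) (fun=> a3) h (f1 g) (fun=> f2)).
Qed.

Lemma mul2_ract b1 a2 b3 : (forall g, fsupp (b1 g)) -> fsupp a2 ->
  mul2 (ract b1 a2) b3 = mul2 b1 (lact a2 b3).
Proof.
move=> f1 f2; apply/funext => g; apply/funext => h; rewrite /ract /mul2 /lact.
etransitivity; first exact: (@conv_assoc _ _ (b1 g) (fun=> a2) (fun t => b3 (g * t)%g) h (f1 g) (fun=> f2)).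
apply: eq_fsbigr => s _; congr (_ * _); apply: eq_fsbigr => u _; by rewrite mulgA.
Qed.

Lemma ract_mul2 b1 b2 a3 : (forall g, fsupp (b1 g)) -> (forall g, fsupp (b2 g)) ->
  ract (mul2 b1 b2) a3 = mul2 b1 (ract b2 a3).
Proof.
move=> f1 f2; apply/funext => g; apply/funext => h; rewrite /ract /mul2.
exact: (@conv_assoc _ _ (b1 g) (fun s => b2 (g * s)%g) (fun=> a3) h (f1 g) (fun s => f2 (g * s)%g)).
Qed.

Lemma mul2A b1 b2 b3 : (forall g, fsupp (b1 g)) -> (forall g, fsupp (b2 g)) ->
  mul2 (mul2 b1 b2) b3 = mul2 b1 (mul2 b2 b3).
Proof.
move=> f1 f2; apply/funext => g; apply/funext => h; rewrite /mul2.
etransitivity; first exact: (@conv_assoc _ _ (b1 g) (fun s => b2 (g * s)%g) (fun t => b3 (g * t)%g) h (f1 g) (fun s => f2 (g * s)%g)).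
apply: eq_fsbigr => s _; congr (_ * _); apply: eq_fsbigr => u _; by rewrite mulgA.
Qed.

Lemma gr_mul1l a : gr_mul (@gr_one k G) a = a.
Proof.
apply/funext => h; rewrite /gr_mul (fsum_delta (s:=1%g)).
  by rewrite /gr_one eqxx mul1r invg1 mul1g.
by move=> t /negbTE H; rewrite /gr_one H mul0r.
Qed.

Lemma gr_mul1r a : gr_mul a (@gr_one k G) = a.
Proof.
apply/funext => h; rewrite /gr_mul (fsum_delta (s:=h)).
  by rewrite /gr_one mulVg eqxx mulr1.
move=> t H; rewrite /gr_one mulg_eq1 eqg_inv.
by rewrite (negbTE H) mulr0.
Qed.

Lemma lact1 b : lact (@gr_one k G) b = b.
Proof.
apply/funext => g; apply/funext => h; rewrite /lact (fsum_delta (s:=1%g)).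
  by rewrite /gr_one eqxx mul1r invg1 mul1g mulg1.
by move=> t /negbTE H; rewrite /gr_one H mul0r.
Qed.

Lemma ract1 b : ract b (@gr_one k G) = b.
Proof.
apply/funext => g; apply/funext => h; rewrite /ract (fsum_delta (s:=h)).
  by rewrite /gr_one mulVg eqxx mulr1.
move=> t H; rewrite /gr_one mulg_eq1 eqg_inv.
by rewrite (negbTE H) mulr0.
Qed.

Lemma lact0 a : lact a (@gr2_zero k G) = @gr2_zero k G.
Proof. by apply/funext => g; apply/funext => h; apply: fsum0 => t; rewrite mulr0. Qed.

Lemma ract0 a : ract (@gr2_zero k G) a = @gr2_zero k G.
Proof. by apply/funext => g; apply/funext => h; apply: fsum0 => t; rewrite mul0r. Qed.

Lemma mul20l b : mul2 (@gr2_zero k G) b = @gr2_zero k G.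
Proof. by apply/funext => g; apply/funext => h; apply: fsum0 => t; rewrite mul0r. Qed.

Lemma mul20r b : mul2 b (@gr2_zero k G) = @gr2_zero k G.
Proof. by apply/funext => g; apply/funext => h; apply: fsum0 => t; rewrite mulr0. Qed.

End D1Assoc.

Section Closure.
Variables (k : pzRingType) (G : groupType).
Notation supp f := [set g : G | f g != (0 : k)].
Implicit Types (a : G -> k) (b : G -> G -> k).

Lemma fsupp_zero : fsupp (@gr_zero k G).
Proof. by apply: (@sub_finite_set _ _ set0) => // g /=; rewrite /gr_zero eqxx. Qed.

Lemma fsupp_one : fsupp (@gr_one k G).
Proof.
apply: (@sub_finite_set _ _ [set 1%g]); last exact: finite_set1.
move=> g; rewrite /= /gr_one; have [->|_] := eqVneq g 1%g; first by move=> _; reflexivity.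
by rewrite eqxx.
Qed.

Lemma fsupp_add a a' : fsupp a -> fsupp a' -> fsupp (gr_add a a').
Proof.
move=> fa fa'; apply: (@sub_finite_set _ _ (supp a `|` supp a')); last by rewrite finite_setU.
move=> g /= H; apply: contrapT => /not_orP[/nsupp ha /nsupp hb]; move: H.
by rewrite /gr_add ha hb addr0 eqxx.
Qed.

Lemma fsupp_opp a : fsupp a -> fsupp (gr_opp a).
Proof. by move=> fa; apply: (@sub_finite_set _ _ (supp a)) => // g /=; rewrite /gr_opp oppr_eq0. Qed.

Lemma fsupp2_zero : fsupp2 (@gr2_zero k G).
Proof.
split; last by move=> g; apply: (@sub_finite_set _ _ set0) => // h /=; rewrite /gr2_zero eqxx.
by apply: (@sub_finite_set _ _ set0) => // g /= [h]; rewrite /gr2_zero eqxx.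
Qed.

Lemma fsupp2_add b b' : fsupp2 b -> fsupp2 b' -> fsupp2 (gr2_add b b').
Proof.
move=> [fb fb2] [fb' fb2']; split; last first.
  by move=> g; apply: (@fsupp_add (b g) (b' g)).
apply: (@sub_finite_set _ _ ([set g | exists h, b g h != 0] `|` [set g | exists h, b' g h != 0])).
  move=> g /= [h H]; apply: contrapT => /not_orP[H1 H2]; move: H; rewrite /gr2_add.
  have -> : b g h = 0 by apply: nsupp => H3; apply: H1; exists h.
  have -> : b' g h = 0 by apply: nsupp => H3; apply: H2; exists h.
  by rewrite addr0 eqxx.
by rewrite finite_setU.
Qed.

Lemma fsupp2_opp b : fsupp2 b -> fsupp2 (gr2_opp b).
Proof.
move=> [fb fb2]; split; last by move=> g; apply: (@fsupp_opp (b g)).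
by apply: (@sub_finite_set _ _ [set g | exists h, b g h != 0]) => // g /= [h]; rewrite /gr2_opp oppr_eq0; exists h.
Qed.

Lemma fsupp_mul a c : fsupp a -> fsupp c -> fsupp (gr_mul a c).
Proof. by move=> fa fc; exact: (@fin_conv _ _ a (fun=> c) fa (fun=> fc)). Qed.

Lemma fsupp2_lact a b : fsupp a -> fsupp2 b -> fsupp2 (lact a b).
Proof.
move=> fa [fb fb2]; split; last first.
  by move=> g; exact: (@fin_conv _ _ a (fun t => b (g * t)%g) fa (fun t => fb2 (g * t)%g)).
apply: (@sub_finite_set _ _ [set (p.1 * p.2^-1)%g | p in [set g | exists h, b g h != 0] `*` supp a]).
  move=> g /= [h /fsum_nz[t /mul_nz[a0 b0]]]; exists ((g * t)%g, t) => /=; last by rewrite mulgK.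
  by split => //; exists (t^-1 * h)%g.
by apply: finite_image; apply: finite_setX.
Qed.

Lemma fsupp2_ract b a : fsupp2 b -> fsupp a -> fsupp2 (ract b a).
Proof.
move=> [fb fb2] fa; split; last first.
  by move=> g; exact: (@fin_conv _ _ (b g) (fun=> a) (fb2 g) (fun=> fa)).
apply: (@sub_finite_set _ _ [set g | exists h, b g h != 0]) => //.
by move=> g /= [h /fsum_nz[t /mul_nz[b0 _]]]; exists t.
Qed.

Lemma fsupp2_mul2 b c : fsupp2 b -> fsupp2 c -> fsupp2 (mul2 b c).
Proof.
move=> [fb fb2] [fc fc2]; split; last first.
  by move=> g; exact: (@fin_conv _ _ (b g) (fun t => c (g * t)%g) (fb2 g) (fun t => fc2 (g * t)%g)).
apply: (@sub_finite_set _ _ [set g | exists h, b g h != 0]) => //.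
by move=> g /= [h /fsum_nz[t /mul_nz[b0 _]]]; exists t.
Qed.

End Closure.

Lemma add6 (V : nmodType) (A A' B B' C C' : V) :
  A + A' + (B + B') + (C + C') = A + B + C + (A' + B' + C').
Proof. by rewrite (addrACA A A' B B') (addrACA (A + B) (A' + B') C C'). Qed.

Lemma add7 (V : nmodType) (x1 x2 x3 x4 x5 x6 x7 : V) :
  x1 + x2 + x3 + x4 + (x5 + x6 + x7) = x1 + (x2 + x4 + x6) + (x3 + x5 + x7).
Proof. by rewrite -!addrA (addrCA x3 x4) (addrCA x5 x6) (addrCA x3 x6). Qed.

Theorem lemma5p2 (G : groupType) (k : pzRingType) : D1_is_ring k G.
Proof.
have E2 (b c : G -> G -> k) : (forall g h, b g h = c g h) -> b = c.
  by move=> H; apply/funext => g; apply/funext => h; apply: H.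
split; first by split; [exact: fsupp_zero | exact: fsupp2_zero].
split; first by split; [exact: fsupp_one | exact: fsupp2_zero].
split.
  move=> [a b] [a' b'] [/= fa fb] [/= fa' fb'].
  by split; [exact: fsupp_add | exact: fsupp2_add].
split.
  by move=> [a b] [/= fa fb]; split; [exact: fsupp_opp | exact: fsupp2_opp].
split.
  move=> [a b] [a' b'] [/= fa fb] [/= fa' fb']; split => /=; first exact: fsupp_mul.
  apply: fsupp2_add; first apply: fsupp2_add.
  - exact: fsupp2_lact.
  - exact: fsupp2_ract.
  - exact: fsupp2_mul2.
split.
  move=> [a b] [a' b'] [a'' b''] _ _ _; rewrite /D1_add /=; congr pair.
    by apply/funext => g; rewrite /gr_add addrA.
  by apply: E2 => g h; rewrite /gr2_add addrA.
split.
  move=> [a b] [a' b'] _ _; rewrite /D1_add /=; congr pair.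
    by apply/funext => g; rewrite /gr_add addrC.
  by apply: E2 => g h; rewrite /gr2_add addrC.
split.
  move=> [a b] _; rewrite /D1_add /=; congr pair.
    by apply/funext => g; rewrite /gr_add /gr_zero add0r.
  by apply: E2 => g h; rewrite /gr2_add /gr2_zero add0r.
split.
  move=> [a b] _; rewrite /D1_add /D1_zero /=; congr pair.
    by apply/funext => g; rewrite /gr_add /gr_opp /gr_zero addNr.
  by apply: E2 => g h; rewrite /gr2_add /gr2_opp /gr2_zero addNr.
split.
  move=> [a1 b1] [a2 b2] [a3 b3] [/= f1 g1] [/= f2 g2] [/= f3 g3].
  rewrite /D1_mul /=; congr pair; first by rewrite gr_mulA.
  have r1 := g1.2; have r2 := g2.2; have r3 := g3.2.
  have rL := (fsupp2_lact f1 g2).2; have rR := (fsupp2_ract g1 f2).2.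
  have rM := (fsupp2_mul2 g1 g2).2.
  have rLR := (fsupp2_add (fsupp2_lact f1 g2) (fsupp2_ract g1 f2)).2.
  rewrite !lactDr // !mul2Dr // !ractDl // !mul2Dl //.
  rewrite lact_mul // ract_lact // mul2_lact // ract_ract // mul2_ract // ract_mul2 // mul2A //.
  apply: E2 => g h; rewrite /gr2_add.
  exact: add7.
split.
  move=> [a b] _; rewrite /D1_mul /D1_one /=; congr pair; first exact: gr_mul1l.
  rewrite lact1 ract0 mul20l; apply: E2 => g h.
  by rewrite /gr2_add /gr2_zero !addr0.
split.
  move=> [a b] _; rewrite /D1_mul /D1_one /=; congr pair; first exact: gr_mul1r.
  rewrite lact0 ract1 mul20r; apply: E2 => g h.
  by rewrite /gr2_add /gr2_zero add0r addr0.
split.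
  move=> [a b] [a' b'] [a'' b''] [/= fa fb] [/= fa' fb'] _.
  rewrite /D1_mul /D1_add /=; congr pair; first by rewrite gr_mulDl.
  rewrite lactDl // ractDl //; [|exact: fb.2|exact: fb'.2].
  rewrite mul2Dl //; [|exact: fb.2|exact: fb'.2].
  by apply: E2 => g h; rewrite /gr2_add add6.
move=> [a b] [a' b'] [a'' b''] [/= fa fb] _ _.
rewrite /D1_mul /D1_add /=; congr pair; first by rewrite gr_mulDr.
rewrite lactDr // ractDr; last exact: fb.2.
rewrite mul2Dr; last exact: fb.2.
by apply: E2 => g h; rewrite /gr2_add add6.
Qed.
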